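(* Let $Q$ be a Foulis quantale. Then the complete orthomodular lattice $[Q]=\{[t]\mid t\in Q\}$ is a left $Q$-module with action $u\bullet k=(u\cdot k)^{\perp\perp}$ for $u\in Q$, $k\in[Q]$, and it is also a right $\mathbf 2$-module.
   Context: A quantale is a complete lattice $Q$ (join $\bigsqcup$) with associative multiplication distributing over arbitrary joins on both sides; unital if it has a two-sided unit $e$; involutive if it has a join-preserving semigroup involution $*$. A Foulis quantale is a unital involutive quantale $Q$ with an endomap $[-]\colon Q\to Q$ such that: (a) $[s]\cdot[s]=[s]=[s]^*$; (b) $[e]=0$; (c) $s\cdot x=0$ iff $x=[s]\cdot y$ for some $y\in Q$. For $t\in Q$ put $t^\perp=[t^*]$. The set $[Q]$ is a complete orthomodular lattice with order $k_1\le k_2$ iff $k_1=k_2\cdot k_1$, top $[0]$, orthocomplement $k^\perp=[k]$, and joins $\bigvee S=[[\bigsqcup S]]$. A left $Q$-module is a complete lattice $A$ with $\bullet\colon Q\times A\to A$ such that $s\bullet\bigvee B=\bigvee_{x\in B}s\bullet x$, $(\bigsqcup T)\bullet a=\bigvee_{t\in T}t\bullet a$, $u\bullet(v\bullet a)=(u\cdot v)\bullet a$, $e\bullet a=a$. $\mathbf 2$ is the two-element chain with meet as multiplication and identity involution; a complete lattice $A$ is a right $\mathbf 2$-module via $a\bullet1=a$, $a\bullet0=0$. *)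

(* Defs.v *)
From Stdlib Require Import ClassicalEpsilon.

Set Implicit Arguments.

Definition img (X Y : Type) (f : X -> Y) (S : X -> Prop) : Y -> Prop :=
  fun y => exists x, S x /\ y = f x.

Definition subset (X : Type) (S A : X -> Prop) : Prop := forall x, S x -> A x.

Definition is_complete_lattice_on (X : Type) (A : X -> Prop)
    (le : X -> X -> Prop) (join : (X -> Prop) -> X) : Prop :=
  (forall a, A a -> le a a) /\
  (forall a b, A a -> A b -> le a b -> le b a -> a = b) /\
  (forall a b c, A a -> A b -> A c -> le a b -> le b c -> le a c) /\
  (forall S, subset S A -> A (join S)) /\
  (forall S, subset S A -> forall x, S x -> le x (join S)) /\
  (forall S, subset S A -> forall y, A y ->
       (forall x, S x -> le x y) -> le (join S) y).

Definition is_complete_lattice (X : Type) (le : X -> X -> Prop)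
    (sup : (X -> Prop) -> X) : Prop :=
  is_complete_lattice_on (fun _ => True) le sup.

Definition is_quantale (Q : Type) (le : Q -> Q -> Prop)
    (sup : (Q -> Prop) -> Q) (mul : Q -> Q -> Q) : Prop :=
  is_complete_lattice le sup /\
  (forall a b c, mul a (mul b c) = mul (mul a b) c) /\
  (forall s T, mul s (sup T) = sup (img (mul s) T)) /\
  (forall T s, mul (sup T) s = sup (img (fun t => mul t s) T)).

Definition is_unital_quantale (Q : Type) (le : Q -> Q -> Prop)
    (sup : (Q -> Prop) -> Q) (mul : Q -> Q -> Q) (e : Q) : Prop :=
  is_quantale le sup mul /\ (forall a, mul e a = a) /\ (forall a, mul a e = a).

Definition is_involutive_quantale (Q : Type) (le : Q -> Q -> Prop)
    (sup : (Q -> Prop) -> Q) (mul : Q -> Q -> Q) (star : Q -> Q) : Prop :=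
  is_quantale le sup mul /\
  (forall a, star (star a) = a) /\
  (forall a b, star (mul a b) = mul (star b) (star a)) /\
  (forall S, star (sup S) = sup (img star S)).

Definition qzero (Q : Type) (sup : (Q -> Prop) -> Q) : Q := sup (fun _ => False).

Definition is_Foulis_quantale (Q : Type) (le : Q -> Q -> Prop)
    (sup : (Q -> Prop) -> Q) (mul : Q -> Q -> Q) (e : Q) (star : Q -> Q)
    (br : Q -> Q) : Prop :=
  is_unital_quantale le sup mul e /\
  is_involutive_quantale le sup mul star /\
  (forall s, mul (br s) (br s) = br s /\ star (br s) = br s) /\
  br e = qzero sup /\
  (forall s x, mul s x = qzero sup <-> exists y, x = mul (br s) y). (* (c) *)

Definition is_left_module (Q : Type) (qsup : (Q -> Prop) -> Q)
    (qmul : Q -> Q -> Q) (qe : Q)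
    (X : Type) (A : X -> Prop) (le : X -> X -> Prop) (join : (X -> Prop) -> X)
    (act : Q -> X -> X) : Prop :=
  is_complete_lattice_on A le join /\
  (forall s a, A a -> A (act s a)) /\
  (forall s B, subset B A -> act s (join B) = join (img (act s) B)) /\
  (forall T a, A a -> act (qsup T) a = join (img (fun t => act t a) T)) /\
  (forall u v a, A a -> act u (act v a) = act (qmul u v) a) /\
  (forall a, A a -> act qe a = a).

Definition is_right_module (Q : Type) (qsup : (Q -> Prop) -> Q)
    (qmul : Q -> Q -> Q) (qe : Q)
    (X : Type) (A : X -> Prop) (le : X -> X -> Prop) (join : (X -> Prop) -> X)
    (act : X -> Q -> X) : Prop :=
  is_complete_lattice_on A le join /\
  (forall a s, A a -> A (act a s)) /\
  (forall B s, subset B A -> act (join B) s = join (img (fun b => act b s) B)) /\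
  (forall a T, A a -> act a (qsup T) = join (img (act a) T)) /\
  (forall a u v, A a -> act (act a u) v = act a (qmul u v)) /\
  (forall a, A a -> act a qe = a).

Definition two_sup (T : bool -> Prop) : bool :=
  if excluded_middle_informative (T true) then true else false.
Definition two_mul : bool -> bool -> bool := andb.
Definition two_e : bool := true.

Definition two_act (X : Type) (join : (X -> Prop) -> X) (a : X) (b : bool) : X :=
  if b then a else join (fun _ => False).

Section BracketLattice.
Variables (Q : Type) (sup : (Q -> Prop) -> Q) (mul : Q -> Q -> Q)
          (star : Q -> Q) (br : Q -> Q).
Definition perp (t : Q) : Q := br (star t).
Definition inBr (k : Q) : Prop := exists t, k = br t.
Definition brle (k1 k2 : Q) : Prop := k1 = mul k2 k1.
Definition brjoin (S : Q -> Prop) : Q := br (br (sup S)).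
Definition bract (u k : Q) : Q := perp (perp (mul u k)).
End BracketLattice.

(* Main.v *)
Require Import Defs.
From Stdlib Require Import Setoid ClassicalEpsilon.

Theorem mainTheorem7 (Q : Type) (le : Q -> Q -> Prop)
    (sup : (Q -> Prop) -> Q) (mul : Q -> Q -> Q) (e : Q) (star : Q -> Q)
    (br : Q -> Q) :
  is_Foulis_quantale le sup mul e star br ->
  is_left_module sup mul e (inBr br) (brle mul) (brjoin sup br)
    (bract mul star br) /\
  is_right_module two_sup two_mul two_e (inBr br) (brle mul) (brjoin sup br)
    (two_act (brjoin sup br)).
Proof.
  intros HF.
  destruct HF as [[HQ [He1 He2]] [[_ [Hss [Hsm Hssup]]] [Hbr [Hbe Hc]]]].
  destruct HQ as [HL [Has [Hdl Hdr]]].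
  destruct HL as [Hrefl [Hanti [Htr [_ [Hub Hlub]]]]].
  assert (Hbot : forall x, le (qzero sup) x).
  { intro x. unfold qzero. apply Hlub; [intros ? ?; exact I | exact I | intros y []]. }
  assert (Hsupext : forall S S', (forall x, S x <-> S' x) -> sup S = sup S').
  { intros S S' H. apply Hanti; try exact I; apply Hlub; try (intros ? ?; exact I);
    try exact I; intros x Hx; apply Hub; try (intros ? ?; exact I); apply H; auto. }
  assert (Hsupz : forall X, (forall x, X x -> x = qzero sup) -> sup X = qzero sup).
  { intros X H. apply Hanti; try exact I; [|apply Hbot].
    apply Hlub; try (intros ? ?; exact I); try exact I.
    intros x Hx. rewrite (H x Hx). apply Hrefl; exact I. }
  assert (Hsupz' : forall X, sup X = qzero sup -> forall x, X x -> x = qzero sup).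
  { intros X H x Hx. apply Hanti; try exact I; [|apply Hbot].
    rewrite <- H. apply Hub; try (intros ? ?; exact I); auto. }
  assert (Hm0r : forall x, mul x (qzero sup) = qzero sup).
  { intro x. unfold qzero. rewrite Hdl. apply Hsupext. intro y; split;
    [intros [w [[] _]] | intros []]. }
  assert (Hm0l : forall x, mul (qzero sup) x = qzero sup).
  { intro x. unfold qzero. rewrite Hdr. apply Hsupext. intro y; split;
    [intros [w [[] _]] | intros []]. }
  assert (Hs0 : star (qzero sup) = qzero sup).
  { unfold qzero. rewrite Hssup. apply Hsupext. intro y; split;
    [intros [w [[] _]] | intros []]. }
  assert (Hee : star e = e).
  { assert (H : star (star e) = star (mul e (star e))) by (rewrite He1; reflexivity).
    rewrite Hsm, !Hss, He1 in H. symmetry; exact H. }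
  assert (HbrI : forall s, mul (br s) (br s) = br s) by (intro s; apply (Hbr s)).
  assert (HbrS : forall s, star (br s) = br s) by (intro s; apply (Hbr s)).
  assert (Hsbr : forall s, mul s (br s) = qzero sup).
  { intro s. apply (proj2 (Hc _ _)). exists e. symmetry; apply He2. }
  assert (HLA : forall x s, mul x s = qzero sup -> exists y, x = mul y (br (star s))).
  { intros x s H. assert (H0 : mul (star s) (star x) = qzero sup)
      by (rewrite <- Hsm, H; apply Hs0).
    destruct (proj1 (Hc _ _) H0) as [y Hy]. exists (star y).
    rewrite <- (Hss x), Hy, Hsm, HbrS. reflexivity. }
  assert (HfixL : forall s x, (exists y, x = mul (br s) y) -> mul (br s) x = x).
  { intros s x [y ->]. rewrite Has, HbrI; reflexivity. }
  assert (HfixR : forall s x, (exists y, x = mul y (br s)) -> mul x (br s) = x).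
  { intros s x [y ->]. rewrite <- Has, HbrI; reflexivity. }
  assert (Hbk : forall t, mul (br (br t)) (br t) = qzero sup).
  { intro t. rewrite <- Hs0, <- (Hsbr (br t)), Hsm, !HbrS. reflexivity. }
  assert (HBBB : forall t, br (br (br t)) = br t).
  { intro t.
    assert (A1 : mul (br (br (br t))) (br t) = br t)
      by (apply HfixL; apply (proj1 (Hc _ _)); apply Hbk).
    assert (A2 : mul (br t) (br (br (br t))) = br (br (br t))).
    { apply HfixL. apply (proj1 (Hc _ _)).
      destruct (HLA _ _ (Hsbr t)) as [y Hy]. rewrite HbrS in Hy.
      assert (H0 : mul (mul y (br (br t))) (br (br (br t))) = qzero sup)
        by (rewrite <- Has, Hsbr, Hm0r; reflexivity).
      rewrite <- Hy in H0. exact H0. }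
    assert (H : star (mul (br t) (br (br (br t)))) = star (br (br (br t))))
      by (rewrite A2; reflexivity).
    rewrite Hsm, !HbrS, A1 in H. symmetry; exact H. }
  assert (HPbb : forall p, inBr br p -> br (br p) = p).
  { intros p [t ->]. apply HBBB. }
  assert (Hbrt : forall t, inBr br (br t)) by (intro t; exists t; reflexivity).
  assert (HPS : forall p, inBr br p -> star p = p).
  { intros p [t ->]. apply HbrS. }
  assert (HK : forall x p, inBr br p ->
             (brle mul (br (br x)) p <-> mul x (br p) = qzero sup)).
  { intros x p [t ->]. unfold brle. split.
    - intro H.
      assert (H' : br (br x) = mul (br (br x)) (br t)).
      { assert (H2 : star (br (br x)) = star (mul (br t) (br (br x))))
          by (rewrite <- H; reflexivity).
        rewrite Hsm, !HbrS in H2. exact H2. }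
      assert (Hxx : mul x (br (br x)) = x).
      { apply HfixR. destruct (HLA _ _ (Hsbr x)) as [y Hy]. rewrite HbrS in Hy.
        exists y; exact Hy. }
      rewrite <- Hxx, <- Has, H', <- Has, Hsbr, !Hm0r. reflexivity.
    - intro H.
      assert (H1 : mul (br x) (br (br t)) = br (br t))
        by (apply HfixL; apply (proj1 (Hc _ _)); exact H).
      assert (H2 : mul (br (br x)) (br (br t)) = qzero sup)
        by (rewrite <- H1, Has, Hbk, Hm0l; reflexivity).
      destruct (HLA _ _ H2) as [y Hy]. rewrite HbrS, HBBB in Hy.
      assert (H3 : mul (br (br x)) (br t) = br (br x)) by (apply HfixR; exists y; exact Hy).
      assert (H4 : star (mul (br (br x)) (br t)) = star (br (br x))) by (rewrite H3; reflexivity).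
      rewrite Hsm, !HbrS in H4. symmetry; exact H4. }
  assert (HsupM : forall S q, mul (sup S) q = qzero sup <->
                             (forall x, S x -> mul x q = qzero sup)).
  { intros S q. rewrite Hdr. split.
    - intros H x Hx. apply (Hsupz' _ H). exists x; split; auto.
    - intro H. apply Hsupz. intros y [x [Hx ->]]. auto. }
  assert (HE : forall s q, mul (br (br s)) q = qzero sup <-> mul s q = qzero sup).
  { intros s q. rewrite Hc, HBBB, <- Hc. reflexivity. }
  assert (Hjle : forall S p, subset S (inBr br) -> inBr br p ->
            (brle mul (brjoin sup br S) p <-> forall x, S x -> brle mul x p)).
  { intros S p HS Hp. unfold brjoin. rewrite (HK _ _ Hp), HsupM. split.
    - intros H x Hx. rewrite <- (HPbb x (HS x Hx)). apply (HK _ _ Hp). auto.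
    - intros H x Hx. apply (HK _ _ Hp). rewrite (HPbb x (HS x Hx)). auto. }
  assert (Hlrefl : forall a, inBr br a -> brle mul a a).
  { intros a [t ->]. unfold brle. rewrite HbrI. reflexivity. }
  assert (Hlanti : forall a b, inBr br a -> inBr br b -> brle mul a b -> brle mul b a -> a = b).
  { unfold brle. intros a b Ha Hb H1 H2.
    assert (H : star a = star (mul b a)) by (rewrite <- H1; reflexivity).
    rewrite Hsm, (HPS a Ha), (HPS b Hb), <- H2 in H. exact H. }
  assert (Hltr : forall a b c, brle mul a b -> brle mul b c -> brle mul a c).
  { unfold brle. intros a b c H1 H2.
    assert (H : mul b a = mul (mul c b) a) by (rewrite <- H2; reflexivity).
    rewrite <- Has, <- H1 in H. exact H. }
  assert (Heq : forall a b, inBr br a -> inBr br b ->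
            (forall p, inBr br p -> (brle mul a p <-> brle mul b p)) -> a = b).
  { intros a b Ha Hb H. apply Hlanti; auto.
    - apply (H b Hb). apply Hlrefl; auto.
    - apply (H a Ha). apply Hlrefl; auto. }
  assert (HCL : is_complete_lattice_on (inBr br) (brle mul) (brjoin sup br)).
  { split; [exact Hlrefl|]. split; [exact Hlanti|]. split.
    { intros a b c _ _ _. apply Hltr. }
    split; [intros; apply Hbrt|]. split.
    - intros S HS x Hx. apply (Hjle S _ HS (Hbrt _)); [apply Hlrefl, Hbrt | auto].
    - intros S HS y Hy H. apply (Hjle S _ HS Hy); auto. }
  assert (HJ0 : forall p, inBr br p -> brle mul (brjoin sup br (fun _ => False)) p).
  { intros p Hp. apply Hjle; auto; intros x []. }
  assert (Hbract : forall u k, inBr br k -> bract mul star br u k = br (br (mul k (star u)))).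
  { intros u k Hk. unfold bract, perp. rewrite HbrS, Hsm, (HPS k Hk). reflexivity. }
  split.
  - split; [exact HCL|]. split.
    { intros s a Ha. unfold bract, perp. apply Hbrt. }
    split.
    { intros u B HB. rewrite Hbract by apply Hbrt.
      apply Heq; [apply Hbrt | apply Hbrt |]. intros p Hp.
      rewrite (HK _ _ Hp), Hjle; auto.
      2:{ intros y [b [Hb ->]]. unfold bract, perp. apply Hbrt. }
      unfold brjoin. rewrite <- Has, HE, HsupM. split.
      - intros H y [b [Hb ->]]. rewrite (Hbract _ _ (HB b Hb)), (HK _ _ Hp), <- Has. auto.
      - intros H b Hb. rewrite Has. apply (HK _ _ Hp). rewrite <- (Hbract _ _ (HB b Hb)).
        apply H. exists b; split; auto. }
    split.
    { intros T a Ha. rewrite (Hbract _ _ Ha).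
      apply Heq; [apply Hbrt | apply Hbrt |]. intros p Hp.
      rewrite (HK _ _ Hp), Hjle; auto.
      2:{ intros y [b [Hb ->]]. unfold bract, perp. apply Hbrt. }
      rewrite Hssup, Hdl, HsupM. split.
      - intros H y [t [Ht ->]]. rewrite (Hbract _ _ Ha), (HK _ _ Hp). apply H.
        exists (star t); split; auto. exists t; split; auto.
      - intros H y [x [[t [Ht ->]] ->]]. apply (HK _ _ Hp). rewrite <- (Hbract _ _ Ha).
        apply H. exists t; split; auto. }
    split.
    { intros u v a Ha. rewrite (Hbract v a Ha), (Hbract _ _ (Hbrt _)), (Hbract _ _ Ha).
      apply Heq; [apply Hbrt | apply Hbrt |]. intros p Hp.
      rewrite !(HK _ _ Hp), <- Has, HE, Hsm, !Has. reflexivity. }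
    { intros a Ha. rewrite (Hbract _ _ Ha), Hee, He2. apply HPbb; auto. }
  - split; [exact HCL|]. split.
    { intros a [|] Ha; simpl; auto. apply Hbrt. }
    split.
    { intros B [|] HB; unfold two_act.
      - unfold brjoin. f_equal. f_equal. apply Hsupext. intro x; split.
        + intro Hx. exists x; split; auto.
        + intros [y [Hy ->]]. auto.
      - apply Heq; [apply Hbrt | apply Hbrt |]. intros p Hp.
        rewrite (Hjle (img _ B) p); auto.
        2:{ intros y [b [Hb ->]]. apply Hbrt. }
        split; intros _; [intros y [b [Hb ->]]|]; apply HJ0; auto. }
    split.
    { intros a T Ha. unfold two_sup.
      destruct (excluded_middle_informative (T true)) as [Ht|Ht]; unfold two_act.
      - apply Heq; auto; [apply Hbrt|]. intros p Hp. rewrite Hjle; auto.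
        2:{ intros y [b [Hb ->]]. destruct b; auto. apply Hbrt. }
        split.
        + intros H y [b [Hb ->]]. destruct b; auto.
        + intro H. apply H. exists true; split; auto.
      - apply Heq; [apply Hbrt| apply Hbrt |]. intros p Hp. rewrite (Hjle (img _ T) p); auto.
        2:{ intros y [b [Hb ->]]. destruct b; [contradiction|]. apply Hbrt. }
        split.
        + intros H y [b [Hb ->]]. destruct b; [contradiction|]. auto.
        + intros _. apply HJ0; auto. }
    split.
    { intros a [|] [|] Ha; reflexivity. }
    { intros a Ha. reflexivity. }
Qed.
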